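(* Let $A\subset\mathbb{Z}$ be the union of $s$ segments $P_1,\dots,P_s$ (so $\max P_i+1<\min P_{i+1}$ for $1\le i<s$), where $1\le s\le |A|-1$. Let $S_A$ be the integer matrix with $s$ columns whose rows are all vectors $\mathbf e_{j_1}+\mathbf e_{j_2}-\mathbf e_{j_3}-\mathbf e_{j_4}\in\mathbb{Z}^s$ such that $(P_{j_1}+P_{j_2})\cap(P_{j_3}+P_{j_4})\neq\emptyset$ and not all of $j_1,j_2,j_3,j_4$ are equal. Then $\dim(A)=s-\mathrm{rank}(S_A)$.
   Context: A segment is a nonempty set of consecutive integers. $A\subset\mathbb{Z}$ is the union of $s$ segments if $A=P_1\cup\dots\cup P_s$ with each $P_i$ a segment of length $k_i$, $\max P_i+1<\min P_{i+1}$ for $1\le i<s$, and $k_i>1$ for some $i$. $\mathbf e_i$ denotes the $i$-th standard basis vector. Sets $A\subset G$, $B\subset G'$ in abelian groups are Freiman isomorphic of order 2 if there is a bijection $\phi:A\to B$ with $x+y=z+t\iff\phi(x)+\phi(y)=\phi(z)+\phi(t)$ for all $x,y,z,t\in A$. The dimension $\dim(A)$ is the largest $d$ such that some $B\subset\mathbb{Z}^d$ not contained in a hyperplane is Freiman isomorphic of order 2 to $A$. *)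

(* Defs.v *)
From HB Require Import structures.
From mathcomp Require Import all_boot all_order all_algebra.
Set Implicit Arguments. Unset Strict Implicit. Unset Printing Implicit Defensive.
Import Order.TTheory GRing.Theory Num.Theory.
Local Open Scope ring_scope.

Definition seg (a : nat -> int) (k : nat -> nat) (j : nat) : seq int :=
  [seq a j + i%:Z | i <- iota 0 (k j)].

Definition segunion (s : nat) (a : nat -> int) (k : nat -> nat) : seq int :=
  flatten [seq seg a k j | j <- iota 0 s].

Definition card_int (A : seq int) : nat := size (undup A).

Definition in_hyperplane (d : nat) (A : seq int) (phi : int -> 'rV[int]_d) : Prop :=
  exists (n : 'rV[rat]_d) (c : rat), n != 0 /\
    forall x, x \in A -> \sum_(i < d) n 0 i * ((phi x 0 i)%:~R : rat) = c.

Definition freiman2_iso (d : nat) (A : seq int) (phi : int -> 'rV[int]_d) : Prop :=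
  {in A &, injective phi} /\
  forall x y z t, x \in A -> y \in A -> z \in A -> t \in A ->
    (x + y == z + t) = (phi x + phi y == phi z + phi t).

Definition realizable (A : seq int) (d : nat) : Prop :=
  exists phi : int -> 'rV[int]_d, freiman2_iso A phi /\ ~ in_hyperplane A phi.

Definition is_dim (A : seq int) (m : nat) : Prop :=
  realizable A m /\ forall d, realizable A d -> (d <= m)%N.

Definition sums_meet (a : nat -> int) (k : nat -> nat) (j1 j2 j3 j4 : nat) : bool :=
  has (fun x1 => has (fun x2 => has (fun x3 => has (fun x4 => x1 + x2 == x3 + x4)
        (seg a k j4)) (seg a k j3)) (seg a k j2)) (seg a k j1).

Definition quad (s : nat) : finType := ('I_s * 'I_s * 'I_s * 'I_s)%type.

Definition SA_row (s : nat) (a : nat -> int) (k : nat -> nat) (q : quad s) : 'rV[rat]_s :=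
  let: (j1, j2, j3, j4) := q in
  if sums_meet a k j1 j2 j3 j4 && ~~ [&& j1 == j2, j2 == j3 & j3 == j4]
  then \row_(i < s) (((i == j1)%:R + (i == j2)%:R - (i == j3)%:R - (i == j4)%:R) : rat)
  else 0.

(* S_A (with additional zero rows, which do not affect the rank). *)
Definition SA (s : nat) (a : nat -> int) (k : nat -> nat) : 'M[rat]_(#|{: quad s}|, s) :=
  \matrix_(r < #|{: quad s}|) SA_row a k (enum_val r).

(* Main.v *)
Require Import Defs.
From HB Require Import structures.
From mathcomp Require Import all_boot all_order all_algebra.
From mathcomp Require Import ring lra zify.
Import Order.TTheory GRing.Theory Num.Theory.
Local Open Scope ring_scope.

Module Helpers.
Set Implicit Arguments. Unset Strict Implicit. Unset Printing Implicit Defensive.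


Lemma mem_segP a k j x :
  reflect (exists2 i, (i < k j)%N & x = a j + i%:Z) (x \in seg a k j).
Proof.
apply: (iffP mapP) => [[i]|[i]]; rewrite ?mem_iota => Hi ->; exists i => //.
by rewrite mem_iota.
Qed.

Lemma mem_segunion s a k x :
  (x \in segunion s a k) = has (fun j => x \in seg a k j) (iota 0 s).
Proof.
apply/flattenP/hasP => [[l /mapP[j Hj ->] Hx]|[j Hj Hx]]; first by exists j.
by exists (seg a k j) => //; apply: map_f.
Qed.

Lemma seg_in_union s a k j i : (j < s)%N -> (i < k j)%N ->
  a j + i%:Z \in segunion s a k.
Proof.
move=> Hj Hi; rewrite mem_segunion; apply/hasP; exists j; first by rewrite mem_iota.
by apply/mem_segP; exists i.
Qed.

Definition dj s a k (x : int) : nat := find (fun j => x \in seg a k j) (iota 0 s).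
Definition di s a k (x : int) : nat := absz (x - a (dj s a k x)).

Lemma dec_spec s a k x : x \in segunion s a k ->
  [/\ (dj s a k x < s)%N, (di s a k x < k (dj s a k x))%N &
      x = a (dj s a k x) + (di s a k x)%:Z].
Proof.
rewrite mem_segunion => H.
have Hf : (dj s a k x < s)%N by move: H; rewrite has_find size_iota.
have := nth_find 0%N H; rewrite nth_iota // add0n -/(dj s a k x).
case/mem_segP => i Hi Hx; rewrite /di.
have -> : x - a (dj s a k x) = i%:Z by rewrite {1}Hx addrC addKr.
by split.
Qed.



Definition gv s (j : 'I_s) (i : nat) : 'rV[rat]_(s + 1) :=
  row_mx (delta_mx 0 j) ((i%:R : rat)%:M).
Definition acol s (a : nat -> int) : 'cV[rat]_s := \col_(l < s) ((a l)%:~R : rat).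
Definition Gm s a : 'M[rat]_(s, s + 1) := row_mx 1%:M (- acol s a).
Definition hv s : 'cV[rat]_(s + 1) := col_mx (const_mx 1) 0.
Definition hv' s a : 'cV[rat]_(s + 1) := col_mx (acol s a) 1.
Definition tau s : 'rV[rat]_(s + 1) := row_mx (const_mx 1) 0.
Definition Bm s a k := SA s a k *m Gm s a.
Definition Wm s a k := col_mx (Bm s a k) (tau s).
Definition hh s a : 'cV[rat]_(s + 1) :=
  hv' s a - (((tau s *m hv' s a) 0 0) / s%:R) *: hv s.

Lemma const11 (c : rat) : const_mx c = c%:M :> 'M_1.
Proof. by apply/matrixP => x y; rewrite !ord1 !mxE. Qed.

Lemma delta_const s (j : 'I_s) (c : rat) :
  delta_mx 0 j *m const_mx c = c%:M :> 'M_1.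
Proof. by rewrite -rowE -const11; apply/rowP => l; rewrite !mxE. Qed.

Lemma delta_acol s a (j : 'I_s) : delta_mx 0 j *m acol s a = ((a j)%:~R)%:M.
Proof. by rewrite -rowE; apply/rowP => l; rewrite !ord1 !mxE. Qed.

Lemma gv_hv s (j : 'I_s) i : gv j i *m hv s = 1%:M.
Proof. by rewrite mul_row_col mulmx0 addr0 delta_const. Qed.

Lemma gv_hv' s a (j : 'I_s) i : gv j i *m hv' s a = ((a j)%:~R + i%:R)%:M.
Proof. by rewrite mul_row_col delta_acol mulmx1 raddfD. Qed.

Lemma SA_rowE s a k (j1 j2 j3 j4 : 'I_s) :
  SA_row a k (j1, j2, j3, j4) =
  if sums_meet a k j1 j2 j3 j4 && ~~ [&& j1 == j2, j2 == j3 & j3 == j4]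
  then (delta_mx 0 j1 + delta_mx 0 j2 - delta_mx 0 j3 - delta_mx 0 j4 : 'rV[rat]_s) else 0.
Proof.
rewrite /SA_row; case: ifP => // _.
by apply/rowP => l; rewrite !mxE !eqxx /=.
Qed.

Lemma SA_const s a k : SA s a k *m (const_mx 1 : 'cV[rat]_s) = 0.
Proof.
apply/row_matrixP => r; rewrite row_mul rowK row0.
case: (enum_val r) => [[[j1 j2] j3] j4]; rewrite SA_rowE; case: ifP => _.
  by rewrite !mulmxDl !mulNmx !delta_const addrK subrr.
exact: mul0mx.
Qed.

Lemma Gm_hv s a : Gm s a *m hv s = const_mx 1.
Proof. by rewrite mul_row_col mul1mx mulmx0 addr0. Qed.

Lemma Gm_hv' s a : Gm s a *m hv' s a = 0.
Proof. by rewrite mul_row_col mul1mx mulmx1 subrr. Qed.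

Lemma Bm_hv s a k : Bm s a k *m hv s = 0.
Proof. by rewrite -mulmxA Gm_hv SA_const. Qed.

Lemma Bm_hv' s a k : Bm s a k *m hv' s a = 0.
Proof. by rewrite -mulmxA Gm_hv' mulmx0. Qed.

Lemma tau_hv s : tau s *m hv s = (s%:R)%:M.
Proof.
rewrite mul_row_col mulmx0 addr0; apply/matrixP => x y; rewrite !ord1 !mxE.
under eq_bigr do rewrite !mxE mulr1.
by rewrite sumr_const card_ord.
Qed.

Lemma Wm_hh s a k : (0 < s)%N -> Wm s a k *m hh s a = 0.
Proof.
move=> s0; rewrite mul_col_mx !mulmxBr -!scalemxAr Bm_hv Bm_hv' scaler0 subrr.
rewrite tau_hv scale_scalar_mx {1}[tau s *m hv' s a]mx11_scalar -raddfB /=.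
rewrite mulfVK ?subrr ?col_mx0 //.
  by rewrite raddf0 col_mx0.
by rewrite pnatr_eq0 -lt0n.
Qed.

Lemma gv_hh s a (j : 'I_s) i :
  gv j i *m hh s a = ((a j)%:~R + i%:R - (tau s *m hv' s a) 0 0 / s%:R)%:M.
Proof.
by rewrite mulmxBr -scalemxAr gv_hv gv_hv' scale_scalar_mx mulr1 -raddfB.
Qed.

Lemma key s (a : nat -> int) (k : nat -> nat) (j1 j2 j3 j4 : 'I_s) i1 i2 i3 i4 :
  (i1 < k j1)%N -> (i2 < k j2)%N -> (i3 < k j3)%N -> (i4 < k j4)%N ->
  a j1 + i1%:Z + (a j2 + i2%:Z) = a j3 + i3%:Z + (a j4 + i4%:Z) ->
  gv j1 i1 + gv j2 i2 - gv j3 i3 - gv j4 i4 = SA_row a k (j1, j2, j3, j4) *m Gm s a.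
Proof.
move=> H1 H2 H3 H4 H.
have Hm : sums_meet a k j1 j2 j3 j4.
  apply/hasP; exists (a j1 + i1%:Z); first by apply/mem_segP; exists i1.
  apply/hasP; exists (a j2 + i2%:Z); first by apply/mem_segP; exists i2.
  apply/hasP; exists (a j3 + i3%:Z); first by apply/mem_segP; exists i3.
  apply/hasP; exists (a j4 + i4%:Z); first by apply/mem_segP; exists i4.
  by apply/eqP.
have E : (i1%:R + i2%:R - i3%:R - i4%:R : rat) =
   - ((a j1)%:~R + (a j2)%:~R - (a j3)%:~R - (a j4)%:~R).
  move/(congr1 (fun z : int => (z%:~R : rat))): H; rewrite !intrD -!pmulrn => H.
  lra.
rewrite SA_rowE Hm /= /gv !opp_row_mx !add_row_mx; case: ifP => [_|].
  rewrite mul_mx_row mulmx1 mulmxN !mulmxDl !mulNmx !delta_acol; congr row_mx.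
  by apply/matrixP => x y; rewrite !ord1 !mxE /=; lra.
move/negbFE => /and3P [/eqP e12 /eqP e23 /eqP e34]; subst.
rewrite mul0mx addrK subrr -row_mx0; congr row_mx.
by apply/matrixP => x y; rewrite !ord1 !mxE /=; lra.
Qed.

Lemma Bm_Wm s a k : (Bm s a k <= Wm s a k)%MS.
Proof. by rewrite /Wm -addsmxE addsmxSl. Qed.

Lemma tau_Wm s a k : (tau s <= Wm s a k)%MS.
Proof. by rewrite /Wm -addsmxE addsmxSr. Qed.

Lemma key_sub s (a : nat -> int) (k : nat -> nat) (j1 j2 j3 j4 : 'I_s) i1 i2 i3 i4 :
  (i1 < k j1)%N -> (i2 < k j2)%N -> (i3 < k j3)%N -> (i4 < k j4)%N ->
  a j1 + i1%:Z + (a j2 + i2%:Z) = a j3 + i3%:Z + (a j4 + i4%:Z) ->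
  (gv j1 i1 + gv j2 i2 - gv j3 i3 - gv j4 i4 <= Bm s a k)%MS.
Proof.
move=> H1 H2 H3 H4 H; rewrite (key H1 H2 H3 H4 H).
have -> : SA_row a k (j1, j2, j3, j4) = row (enum_rank ((j1, j2, j3, j4) : quad s)) (SA s a k).
  by rewrite rowK enum_rankK.
by apply: submxMr; apply: row_sub.
Qed.

Lemma key_eq s (a : nat -> int) (j1 j2 j3 j4 : 'I_s) i1 i2 i3 i4 m (W : 'M[rat]_(m, s + 1)) :
  (0 < s)%N -> W *m hh s a = 0 ->
  (gv j1 i1 + gv j2 i2 - gv j3 i3 - gv j4 i4 <= W)%MS ->
  a j1 + i1%:Z + (a j2 + i2%:Z) = a j3 + i3%:Z + (a j4 + i4%:Z).
Proof.
move=> s0 HW /submxP [D HD].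
have : (gv j1 i1 + gv j2 i2 - gv j3 i3 - gv j4 i4) *m hh s a = 0.
  by rewrite HD -mulmxA HW mulmx0.
rewrite !mulmxDl !mulNmx !gv_hh => /matrixP /(_ 0 0); rewrite !mxE /= => E.
apply: (intr_inj (R := rat)); rewrite !intrD -!pmulrn; lra.
Qed.

Lemma Gm_free s a : row_free (Gm s a).
Proof.
rewrite /row_free eqn_leq rank_leq_row /=.
have E : Gm s a *m col_mx 1%:M (0 : 'M_(1, s)) = 1%:M.
  by rewrite mul_row_col mul1mx mulmx0 addr0.
by rewrite -{1}(mxrank1 rat s) -E mxrankM_maxl.
Qed.

Lemma rank_Bm s a k : \rank (Bm s a k) = \rank (SA s a k).
Proof. exact: mxrankMfree (Gm_free s a). Qed.

Lemma rank_Wm s a k : (0 < s)%N -> \rank (Wm s a k) = (\rank (SA s a k)).+1.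
Proof.
move=> s0; apply/eqP; rewrite eqn_leq; apply/andP; split.
  rewrite /Wm -addsmxE -rank_Bm -[(\rank (Bm s a k)).+1]addn1.
  apply: leq_trans (leq_of_leqif (mxrank_adds_leqif _ _)) _.
  by rewrite leq_add2l rank_leq_row.
rewrite -rank_Bm; apply: rank_ltmx; rewrite ltmxE Bm_Wm /=.
apply/negP => HW.
have /submxP [D HD] := submx_trans (tau_Wm s a k) HW.
have := tau_hv s; rewrite HD -mulmxA Bm_hv mulmx0 => /matrixP /(_ 0 0).
rewrite !mxE /= mulr1n => /esym /eqP.
by rewrite pnatr_eq0; case: s s0 {D HD HW}.
Qed.



Definition Phi d (phi : int -> 'rV[int]_d) x : 'rV[rat]_d :=
  map_mx (fun z : int => (z%:~R : rat)) (phi x).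

Lemma upper_W s (a : nat -> int) (k : nat -> nat) d :
  (forall j, (j < s)%N -> (0 < k j)%N) ->
  (exists j, (j < s)%N /\ (1 < k j)%N) -> (0 < s)%N ->
  realizable (segunion s a k) d -> (d <= s + 1 - \rank (Wm s a k))%N.
Proof.
move=> Hk [js [Hjs Hks]] s0 [phi [[Hinj Hfr] Hnh]].
set A := segunion s a k.
have Hfr' : forall x y z t, x \in A -> y \in A -> z \in A -> t \in A ->
    x + y = z + t -> Phi phi x + Phi phi y = Phi phi z + Phi phi t.
  move=> x y z t Hx Hy Hz Ht E.
  have := Hfr x y z t Hx Hy Hz Ht; rewrite E eqxx => /esym /eqP E2.
  by rewrite /Phi -!map_mxD E2.
set w := Phi phi (a js + 1%:Z) - Phi phi (a js + 0%:Z).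
have Hstep : forall j, (j < s)%N -> forall i, (i < k j)%N ->
    Phi phi (a j + i%:Z) = Phi phi (a j + 0%:Z) + i%:R *: w.
  move=> j Hj i.
  suff H : ((i < k j)%N -> Phi phi (a j + i%:Z) = Phi phi (a j + 0%:Z) + i%:R *: w) /\
           ((i.+1 < k j)%N -> Phi phi (a j + i.+1%:Z) = Phi phi (a j + 0%:Z) + i.+1%:R *: w).
    exact: H.1.
  elim: i => [|i [IH0 IH]].
    split => [_|H1]; first by rewrite mulr0n scale0r !addr0.
    have E := Hfr' _ _ _ _ (@seg_in_union s a k j 1 Hj H1)
      (@seg_in_union s a k js 0 Hjs (ltnW Hks)) (@seg_in_union s a k j 0 Hj (ltnW H1))
      (@seg_in_union s a k js 1 Hjs Hks).
    have {}E := E (ltac:(ring)); apply/rowP => l.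
    have := congr1 (fun M : 'rV[rat]_d => M 0 l) E; rewrite /w !mxE /= => {}E.
    rewrite mulr1n; lra.
  split => // H2.
  have H1 := ltnW H2; have H0 := ltnW H1.
  have E := Hfr' _ _ _ _ (@seg_in_union s a k j i Hj H0)
      (@seg_in_union s a k j i.+2 Hj H2) (@seg_in_union s a k j i.+1 Hj H1)
      (@seg_in_union s a k j i.+1 Hj H1).
  have {}E := E (ltac:(lia)); apply/rowP => l.
  have := congr1 (fun M : 'rV[rat]_d => M 0 l) E; rewrite !IH // IH0 // !mxE /= => {}E.
  move: E; rewrite /w ?mxE -!natr1 /=; lra.
set U : 'M[rat]_(s, d) := \matrix_(j < s) Phi phi (a j + 0%:Z).
set L : 'M[rat]_(s + 1, d) := col_mx U w.
have gvL : forall (j : 'I_s) i, (i < k j)%N -> gv j i *m L = Phi phi (a j + i%:Z).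
  by move=> j i Hi; rewrite mul_row_col -rowE rowK mul_scalar_mx (@Hstep j (ltn_ord j) i Hi).
have BL : Bm s a k *m L = 0.
  apply/row_matrixP => r; rewrite /Bm -mulmxA row_mul rowK row0.
  case: (enum_val r) => [[[j1 j2] j3] j4].
  case Hc: (sums_meet a k j1 j2 j3 j4 && ~~ [&& j1 == j2, j2 == j3 & j3 == j4]); last first.
    by rewrite /SA_row Hc mul0mx.
  move: (Hc) => /andP [Hm _].
  move: Hm => /hasP [x1 /mem_segP [i1 Hi1 ->]] /hasP [x2 /mem_segP [i2 Hi2 ->]].
  move=> /hasP [x3 /mem_segP [i3 Hi3 ->]] /hasP [x4 /mem_segP [i4 Hi4 ->]] /eqP E.
  rewrite mulmxA -(key Hi1 Hi2 Hi3 Hi4 E) !mulmxDl !mulNmx !gvL //.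
  rewrite (Hfr' _ _ _ _ _ _ _ _ E) ?seg_in_union //.
  by apply/rowP => l; rewrite !mxE; ring.
set c : 'rV[rat]_d := s%:R^-1 *: (tau s *m L).
set L' := L - hv s *m c.
have gvL' : forall (j : 'I_s) i, (i < k j)%N -> gv j i *m L' = Phi phi (a j + i%:Z) - c.
  by move=> j i Hi; rewrite mulmxBr mulmxA gv_hv mul1mx gvL.
have WL' : Wm s a k *m L' = 0.
  rewrite mul_col_mx !mulmxBr !mulmxA Bm_hv tau_hv mul0mx BL subrr.
  rewrite mul_scalar_mx /c scalerA mulfV ?scale1r ?subrr ?col_mx0 //.
  by rewrite pnatr_eq0; case: s s0 {Hk Hjs A Hfr' Hfr Hinj Hnh w Hstep U L gvL BL c L' gvL'}.
have R1 : (\rank L' <= s + 1 - \rank (Wm s a k))%N.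
  have : (Wm s a k <= kermx L')%MS by rewrite sub_kermx WL'.
  move/mxrankS; rewrite mxrank_ker => H.
  have := rank_leq_row L'; lia.
apply: leq_trans R1; rewrite leqNgt; apply/negP => Hlt; apply: Hnh.
set K := kermx L'^T.
have KL : K *m L'^T = 0 := mulmx_ker _.
have HK : K != 0.
  by rewrite -mxrank_eq0 mxrank_ker mxrank_tr -lt0n subn_gt0.
have [l Hl] : exists l, row l K != 0.
  case: (pickP (fun l => row l K != 0)) => [l Hl|H0]; first by exists l.
  case/negP: HK; apply/eqP/row_matrixP => l; move: (H0 l) => /negbFE /eqP ->.
  by rewrite row0.
set n := row l K.
have nL : n *m L'^T = 0.
  by rewrite /n -row_mul KL row0.
have LN : L' *m n^T = 0.
  by have := congr1 trmx nL; rewrite trmx_mul trmxK trmx0.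
exists n, ((c *m n^T) 0 0); split => // x Hx.
case: (dec_spec Hx) => Hj Hi Ex.
have PhiE : Phi phi x = gv (Ordinal Hj) (di s a k x) *m L' + c.
  by rewrite gvL' // subrK /= -Ex.
have : (Phi phi x *m n^T) 0 0 = (c *m n^T) 0 0.
  by rewrite PhiE mulmxDl -mulmxA LN mulmx0 add0r.
move <-; rewrite mxE; apply: eq_bigr => i _; rewrite !mxE mulrC.
by [].
Qed.



Lemma int_scale m n (N : 'M[rat]_(m, n)) :
  exists (Nz : 'M[int]_(m, n)) (c : rat), c != 0 /\
    map_mx (fun z : int => (z%:~R : rat)) Nz = c *: N.
Proof.
pose P := \prod_(p : 'I_m * 'I_n) denq (N p.1 p.2).
exists (\matrix_(i, j) (numq (N i j) * \prod_(p : 'I_m * 'I_n | p != (i, j)) denq (N p.1 p.2))).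
exists (P%:~R); split.
  rewrite intr_eq0 gt_eqF // /P; apply: prodr_gt0 => p _; exact: denq_gt0.
apply/matrixP => i j; rewrite !mxE.
rewrite intrM numqE /P [in RHS](bigD1 (i, j)) //= intrM.
ring.
Qed.

Definition Mk s a k := cokermx (Wm s a k).
Definition Nk s a k := (row_base (Mk s a k)^T)^T.

Lemma NE s a k (v : 'rV[rat]_(s + 1)) : (v *m Nk s a k == 0) = (v <= Wm s a k)%MS.
Proof.
rewrite submxE -/(Mk s a k).
have H1 : (row_base (Mk s a k)^T <= (Mk s a k)^T)%MS by rewrite eq_row_base.
have H2 : ((Mk s a k)^T <= row_base (Mk s a k)^T)%MS by rewrite eq_row_base.
case/submxP: H1 => D1 HD1; case/submxP: H2 => D2 HD2.
have E1 : Nk s a k = Mk s a k *m D1^T.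
  rewrite /Nk; apply: (canLR (@trmxK _ _ _)).
  by rewrite [(Mk s a k *m _)^T]trmx_mul trmxK.
have E2 : Mk s a k = Nk s a k *m D2^T.
  rewrite /Nk -[_^T *m D2^T]trmx_mul; exact: (canRL (@trmxK _ _ _) HD2).
apply/eqP/eqP => H.
  by rewrite E2 mulmxA H mul0mx.
by rewrite E1 mulmxA H mul0mx.
Qed.

Lemma Ninj s a k (u : 'cV[rat]_(\rank (Mk s a k)^T)) : Nk s a k *m u = 0 -> u = 0.
Proof.
move=> H; have : u^T *m (row_base (Mk s a k)^T) = 0.
  by have := congr1 trmx H; rewrite [(_ *m u)^T]trmx_mul trmx0 /Nk [(row_base _)^T^T]trmxK.
move/eqP; rewrite mulmx_free_eq0 ?row_base_free // => /eqP.
by move/(congr1 trmx); rewrite trmxK trmx0.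
Qed.

Lemma delta_mul m (u : 'cV[rat]_m) l : ((delta_mx 0 l : 'rV[rat]_m) *m u) 0 0 = u l 0.
Proof. by rewrite -rowE mxE. Qed.

Lemma gv_lshift s (j : 'I_s) : gv j 0 = delta_mx 0 (lshift 1 j).
Proof. by rewrite delta_mx_lshift /gv raddf0. Qed.

Lemma gv_rshift s (j : 'I_s) : gv j 1 - gv j 0 = delta_mx 0 (rshift s (0 : 'I_1)).
Proof.
rewrite delta_mx_rshift /gv opp_row_mx add_row_mx subrr raddf0 subr0; congr row_mx.
by apply/matrixP => x y; rewrite !ord1 !mxE.
Qed.

Lemma map_intr_inj m n (A B : 'M[int]_(m, n)) :
  map_mx (fun z : int => (z%:~R : rat)) A = map_mx (fun z : int => (z%:~R : rat)) B -> A = B.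
Proof.
move=> H; apply/matrixP => i j.
by have := congr1 (fun M : 'M[rat]_(m, n) => M i j) H; rewrite !mxE => /intr_inj.
Qed.

Lemma lower s (a : nat -> int) (k : nat -> nat) : (0 < s)%N ->
  (forall j, (j < s)%N -> (0 < k j)%N) ->
  (exists j, (j < s)%N /\ (1 < k j)%N) ->
  realizable (segunion s a k) (\rank (Mk s a k)^T).
Proof.
move=> s0 Hk [js [Hjs Hks]].
have [Nz [c [c0 HNz]]] := int_scale (Nk s a k).
pose j0 : 'I_s := Ordinal s0.
pose dJ x : 'I_s := insubd j0 (dj s a k x).
pose gz (j : 'I_s) (i : nat) : 'rV[int]_(s + 1) := row_mx (delta_mx 0 j) ((i%:Z)%:M).
pose phi x := gz (dJ x) (di s a k x) *m Nz.
set A := segunion s a k.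
have gzE : forall j i, map_mx (fun z : int => (z%:~R : rat)) (gz j i) = gv j i.
  move=> j i; rewrite map_row_mx map_delta_mx map_scalar_mx /gv.
  by [].
have PhiE : forall x, Phi phi x = c *: (gv (dJ x) (di s a k x) *m Nk s a k).
  by move=> x; rewrite /Phi /phi map_mxM gzE HNz scalemxAr.
have dJE : forall x, x \in A -> (di s a k x < k (dJ x))%N /\ a (dJ x) + (di s a k x)%:Z = x.
  move=> x Hx; case: (dec_spec Hx) => Hj Hi Ex.
  by rewrite /dJ insubdK //; split.
have wd : forall x (j : 'I_s) i, x \in A -> (i < k j)%N -> a j + i%:Z = x ->
    gv (dJ x) (di s a k x) *m Nk s a k = gv j i *m Nk s a k.
  move=> x j i Hx Hi Ex; have [Hx1 Hx2] := dJE x Hx.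
  have E : a (dJ x) + (di s a k x)%:Z + (a j + i%:Z) = a j + i%:Z + (a j + i%:Z).
    by rewrite Hx2 Ex.
  have := submx_trans (key_sub Hx1 Hi Hi Hi E) (Bm_Wm s a k).
  rewrite -NE addrK mulmxBl subr_eq0 => /eqP //.
have Hrho : forall x y z t, x \in A -> y \in A -> z \in A -> t \in A ->
    (phi x + phi y == phi z + phi t) =
    (gv (dJ x) (di s a k x) + gv (dJ y) (di s a k y) - gv (dJ z) (di s a k z)
      - gv (dJ t) (di s a k t) <= Wm s a k)%MS.
  move=> x y z t Hx Hy Hz Ht.
  have -> : (phi x + phi y == phi z + phi t) = (Phi phi x + Phi phi y == Phi phi z + Phi phi t).
    apply/eqP/eqP => [H|H]; first by rewrite /Phi -!map_mxD H.
    by apply: map_intr_inj; rewrite !map_mxD.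
  rewrite !PhiE -!scalerDr -subr_eq0 -scalerBr scaler_eq0 (negbTE c0) /= -NE.
  by rewrite !mulmxDl !mulNmx opprD addrA.
have Hfr : forall x y z t, x \in A -> y \in A -> z \in A -> t \in A ->
    (x + y == z + t) = (phi x + phi y == phi z + phi t).
  move=> x y z t Hx Hy Hz Ht; rewrite Hrho //.
  have [Hx1 Hx2] := dJE x Hx; have [Hy1 Hy2] := dJE y Hy.
  have [Hz1 Hz2] := dJE z Hz; have [Ht1 Ht2] := dJE t Ht.
  apply/eqP/idP => [E|H].
    apply: submx_trans (Bm_Wm s a k); apply: key_sub => //.
    by rewrite Hx2 Hy2 Hz2 Ht2.
  have := key_eq s0 (Wm_hh a k s0) H.
  by rewrite Hx2 Hy2 Hz2 Ht2.
exists phi; split; first split => //.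
  move=> x y Hx Hy Hxy; have := Hfr x x y y Hx Hx Hy Hy.
  rewrite Hxy eqxx => /eqP; lia.
move=> [n [kap [n0 Hn]]].
set u := Nk s a k *m n^T.
have Hf : forall (j : 'I_s) i, (i < k j)%N -> (gv j i *m u) 0 0 = kap / c.
  move=> j i Hi; have Hx := @seg_in_union s a k j i (ltn_ord j) Hi.
  have := Hn _ Hx.
  have -> : \sum_(l < \rank (Mk s a k)^T) n 0 l * (phi (a j + i%:Z) 0 l)%:~R =
            (Phi phi (a j + i%:Z) *m n^T) 0 0.
    by rewrite mxE; apply: eq_bigr => l _; rewrite !mxE mulrC.
  rewrite PhiE (wd _ j i Hx Hi erefl) -scalemxAl mxE /u mulmxA => <-.
  by rewrite mulrAC mulfV // mul1r.
have tu : tau s *m u = 0.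
  have := tau_Wm s a k; rewrite -NE => /eqP H.
  by rewrite /u mulmxA H mul0mx.
have kap0 : kap / c = 0.
  have := congr1 (fun M : 'M[rat]_1 => M 0 0) tu; rewrite mxE big_split_ord /=.
  rewrite [X in _ + X = _]big1 => [|l _]; last by rewrite row_mxEr mxE mul0r.
  rewrite addr0.
  under eq_bigr => l _ do rewrite row_mxEl mxE mul1r -delta_mul -gv_lshift (Hf l 0%N (Hk l (ltn_ord l))).
  rewrite sumr_const card_ord -mulr_natl mxE => /eqP; rewrite mulf_eq0 pnatr_eq0.
  by case: s s0 {Hk Hjs j0 dJ gz phi A gzE PhiE dJE wd Hrho Hfr n n0 Hn u Hf tu Nz HNz} => //= s' _ /eqP.
have u0 : u = 0.
  apply/matrixP => l o; rewrite ord1 [RHS]mxE -[l]splitK; case: (split l) => [j|o'] /=.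
    by rewrite -delta_mul -gv_lshift (Hf j 0%N (Hk j (ltn_ord j))).
  rewrite ord1 -delta_mul -(gv_rshift (Ordinal Hjs)) mulmxBl mxE.
  rewrite (Hf (Ordinal Hjs) 1%N Hks) [X in _ + X]mxE (Hf (Ordinal Hjs) 0%N (ltnW Hks)).
  by rewrite subrr.
have := Ninj u0 => /(congr1 trmx); rewrite trmxK trmx0 => nz.
by rewrite nz eqxx in n0.
Qed.

End Helpers.
Import Helpers.

Theorem corollary2p2 (s : nat) (a : nat -> int) (k : nat -> nat) :
  (forall j, (j < s)%N -> (0 < k j)%N) ->
  (forall j, (j.+1 < s)%N -> a j + (k j)%:Z < a j.+1) ->
  (exists j, (j < s)%N /\ (1 < k j)%N) ->
  (1 <= s)%N -> (s <= card_int (segunion s a k) - 1)%N ->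
  is_dim (segunion s a k) (s - \rank (SA s a k)).
Proof.
move=> Hk _ Hex s1 _; split.
  have := @lower s a k s1 Hk Hex.
  by rewrite mxrank_tr /Mk mxrank_coker rank_Wm // addn1 subSS.
move=> d Hd; have := @upper_W s a k d Hk Hex s1 Hd.
by rewrite rank_Wm // addn1 subSS.
Qed.
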